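(* Let $V$ be an $n$-dimensional complex vector space with complete flag $F_\bullet$, let $U\subseteq V$ be an $r$-dimensional subspace lying in the Schubert variety $\Omega_I(F_\bullet)\subseteq\mathrm{Gr}(r,V)$ for some $r$-element $I\subseteq[n]$, and let $W=V/U$. (i) If $X\subseteq U$ is a subspace of dimension $x$ with $X\in\Omega_P(F_\bullet U)\subseteq\mathrm{Gr}(x,U)$ for an $x$-element $P\subseteq[r]$, then $X\in\Omega_{I_P}(F_\bullet)\subseteq\mathrm{Gr}(x,V)$. (ii) If $Y\subseteq W$ is a subspace of dimension $y$ with $Y\in\Omega_P(F_\bullet W)\subseteq\mathrm{Gr}(y,W)$ for a $y$-element $P\subseteq[n-r]$, and $Y=Z/U$ with $U\subseteq Z\subseteq V$, then $Z\in\Omega_{I^+_P}(F_\bullet)\subseteq\mathrm{Gr}(r+y,V)$.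
   Context: $[n]=\{1,\dots,n\}$. A complete flag in an $N$-dimensional space $E$ is $0=F_0\subset F_1\subset\cdots\subset F_N=E$ with $\dim F_i=i$. For $J=\{j_1<\dots<j_k\}\subseteq[N]$, $\Omega_J(F_\bullet)=\{L\in\mathrm{Gr}(k,E):\dim(L\cap F_{j_a})\ge a,\ 1\le a\le k\}$; the Schubert cell $\Omega^\circ_J(F_\bullet)$ is the set of $k$-dimensional $L$ with $\{i\in[N]: L\cap F_i\ne L\cap F_{i-1}\}=J$. Induced flags: let $H=\{h_1<\dots<h_r\}$ be the set with $U\in\Omega^\circ_H(F_\bullet)$ and $H^c=[n]\setminus H=\{h^c_1<\dots<h^c_{n-r}\}$; then $F_kU=F_{h_k}\cap U$ ($1\le k\le r$) and $F_kW=(U+F_{h^c_k})/U$ ($1\le k\le n-r$). For $I=\{i_1<\dots<i_r\}$ and $P=\{p_1<\dots<p_x\}\subseteq[r]$, $I_P=\{i_{p_1}<\dots<i_{p_x}\}$; for $P\subseteq[n-r]$, $I^+_P=I\cup\{i^c_p:p\in P\}$ where $[n]\setminus I=\{i^c_1<\dots<i^c_{n-r}\}$. *)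

(* Defs.v *)
From HB Require Import structures.
From mathcomp Require Import all_boot all_order all_algebra.
From mathcomp Require Export complex.
From mathcomp Require Export reals.
Export all_boot all_order all_algebra.

Set Implicit Arguments.
Unset Strict Implicit.
Unset Printing Implicit Defensive.

(* Index sets J ⊆ [N] = {1,...,N} are encoded as strictly increasing
   sequences of naturals, 1-based as in the paper: j_a = nth 0 J (a-1). *)
Definition index_set (N : nat) (J : seq nat) : bool :=
  sorted ltn J && all (fun j => (0 < j <= N)%N) J.

Definition compl_idx (N : nat) (J : seq nat) : seq nat :=
  [seq i <- iota 1 N | i \notin J].

Section Flags.
Variables (K : fieldType) (vT : vectType K).

Definition complete_flag (E : {vspace vT}) (F : nat -> {vspace vT}) : Prop :=
  F 0%N = 0%VS /\
  (forall i, (i <= \dim E)%N -> (F i <= E)%VS /\ \dim (F i) = i) /\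
  (forall i, (i < \dim E)%N -> (F i <= F i.+1)%VS) /\
  F (\dim E) = E.

Definition schubert_variety (E : {vspace vT}) (F : nat -> {vspace vT})
    (J : seq nat) (L : {vspace vT}) : Prop :=
  (L <= E)%VS /\ \dim L = size J /\
  (forall a, (a < size J)%N -> (a.+1 <= \dim (L :&: F (nth 0%N J a)))%N).

Definition jump_set (N : nat) (F : nat -> {vspace vT}) (L : {vspace vT})
    : seq nat :=
  [seq i <- iota 1 N | (L :&: F i != L :&: F i.-1)%VS].

Definition schubert_cell (E : {vspace vT}) (F : nat -> {vspace vT})
    (J : seq nat) (L : {vspace vT}) : Prop :=
  (L <= E)%VS /\ \dim L = size J /\ jump_set (\dim E) F L = J.

Definition sub_flag (N : nat) (F : nat -> {vspace vT}) (U : {vspace vT})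
    (k : nat) : {vspace vT} :=
  if k == 0%N then 0%VS else (F (nth 0%N (jump_set N F U) k.-1) :&: U)%VS.

End Flags.

(* induced flag on W = V/U, where the quotient is given by a linear
   surjection pi : V -> W with kernel U:
   F_k W = pi(U + F_{h^c_k}), H^c = [N] \ H. *)
Definition quot_flag (K : fieldType) (vT wT : vectType K) (N : nat)
    (F : nat -> {vspace vT}) (U : {vspace vT}) (pi : 'Hom(vT, wT))
    (k : nat) : {vspace wT} :=
  if k == 0%N then 0%VS
  else (pi @: (U + F (nth 0%N (compl_idx N (jump_set N F U)) k.-1)))%VS.

Definition idx_sub (I P : seq nat) : seq nat :=
  [seq nth 0%N I p.-1 | p <- P].

Definition idx_plus (N : nat) (I P : seq nat) : seq nat :=
  sort leq (I ++ [seq nth 0%N (compl_idx N I) p.-1 | p <- P]).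

(* Main.v *)
Require Import Defs.
From mathcomp Require Import zify.


Definition cnt (s : seq nat) (j : nat) := count (fun x => x <= j) s.

Lemma lemB s j k : sorted leq s -> 0 < k <= cnt s j -> nth 0 s k.-1 <= j.
Proof.
move=> ss; case: k => // k /andP[_ kc] /=; rewrite leqNgt; apply/negP => hj.
have : cnt s j <= k.
  rewrite /cnt -(cat_take_drop k s) count_cat.
  have -> : count (fun x => x <= j) (drop k s) = 0.
    apply/eqP; rewrite -leqn0 leqNgt -has_count; apply/hasPn => x.
    case/(nthP 0) => i; rewrite size_drop => hi <-.
    have {}hi : (i < size s - k)%N := hi.
    rewrite nth_drop -ltnNge; apply: (leq_trans hj).
    apply: (sorted_leq_nth leq_trans leqnn) => //; rewrite ?unfold_in /=; lia.
  rewrite addn0; apply: (leq_trans (count_size _ _)); rewrite size_take; case: ifP => //; lia.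
lia.
Qed.

Lemma lemA s a j : sorted leq s -> a < size s -> nth 0 s a <= j -> a.+1 <= cnt s j.
Proof.
move=> ss ha hj; rewrite /cnt -(cat_take_drop a.+1 s) count_cat.
have -> : count (fun x => x <= j) (take a.+1 s) = a.+1.
  have : all (fun x => x <= j) (take a.+1 s).
    apply/allP => x; case/(nthP 0) => i; rewrite size_takel // => hi <-.
    rewrite nth_take //; apply: leq_trans hj.
    apply: (sorted_leq_nth leq_trans leqnn) => //; rewrite ?unfold_in /=; lia.
  by rewrite all_count size_takel // => /eqP.
by rewrite leq_addr.
Qed.

Lemma count_filterC (T : eqType) (a p : pred T) s :
  count a (filter p s) + count a (filter (predC p) s) = count a s.
Proof. by elim: s => //= x s IH; case: (p x) => /=; rewrite -IH; case: (a x) => /=; lia. Qed.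

Lemma count_le_iota j n : j <= n -> count (fun i => i <= j) (iota 1 n) = j.
Proof.
move=> jn; rewrite -(subnKC jn) iotaD count_cat.
rewrite (eq_in_count (a2 := predT)); last by move=> x; rewrite mem_iota /=; lia.
rewrite (eq_in_count (s := iota (1 + j) _) (a2 := pred0)); last by move=> x; rewrite mem_iota /=; lia.
by rewrite count_predT size_iota count_pred0 addn0.
Qed.

Lemma count_sub_in (T : eqType) (a1 a2 : pred T) s :
  (forall x, x \in s -> a1 x -> a2 x) -> count a1 s <= count a2 s.
Proof.
elim: s => //= x s IH H.
have := IH (fun y ys => H y (@mem_behead _ (x :: s) y ys)).
have := H x (mem_head _ _); case: (a1 x); case: (a2 x) => //= ; try lia.
Qed.

Lemma lemC s a b : uniq s -> a <= b -> cnt s b <= cnt s a + (b - a).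
Proof.
move=> us ab; rewrite /cnt.
have -> : count (fun x => x <= b) s = count (fun x => x <= a) s + count (fun x => a < x <= b) s.
  elim: s {us} => //= x s ->; case: (leqP x a) => /=; case: (leqP x b); lia.
rewrite leq_add2l -size_filter.
have -> : b - a = size (iota a.+1 (b - a)) by rewrite size_iota.
apply: uniq_leq_size; first exact: filter_uniq.
move=> x; rewrite mem_filter mem_iota => /andP[]; lia.
Qed.

Lemma split_cnt {p : pred nat} {n j} : j <= n ->
  cnt (filter p (iota 1 n)) j + cnt (filter (predC p) (iota 1 n)) j = j.
Proof. by move=> jn; rewrite /cnt count_filterC count_le_iota. Qed.

Lemma compl_sorted n I : sorted ltn (compl_idx n I).
Proof. rewrite /compl_idx; apply: sorted_filter; [exact: ltn_trans | exact: iota_ltn_sorted]. Qed.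

Lemma ltn_leq_sorted s : sorted ltn s -> sorted leq s.
Proof. by apply: sub_sorted => x y /ltnW. Qed.

Lemma I_perm {n I} : index_set n I -> perm_eq I (filter (mem I) (iota 1 n)).
Proof.
case/andP=> sI aI; apply: uniq_perm.
- exact: (sorted_uniq ltn_trans ltnn).
- exact/filter_uniq/iota_uniq.
move=> x; rewrite mem_filter mem_iota /=; apply/idP/idP => [xI | /andP[] //].
have /= := allP aI x xI; rewrite xI /=; lia.
Qed.

Lemma cnt_I n I j : index_set n I -> j <= n ->
  cnt I j + cnt (compl_idx n I) j = j.
Proof.
move=> iI jn; rewrite /cnt (permP (I_perm iI)).
have := @split_cnt (fun x => x \in I) _ _ jn; rewrite /compl_idx.
have -> : [seq x <- iota 1 n | x \in I] = filter (mem I) (iota 1 n) by apply: eq_filter.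
by [].
Qed.

Lemma size_compl n I : index_set n I -> size (compl_idx n I) = n - size I.
Proof.
move=> iI; rewrite (perm_size (I_perm iI)).
have := @count_filterC _ predT (fun x => x \in I) (iota 1 n).
rewrite !count_predT size_iota /compl_idx.
have -> : [seq x <- iota 1 n | x \in I] = filter (mem I) (iota 1 n) by apply: eq_filter.
have -> : [seq i <- iota 1 n | i \notin I] = filter (predC (mem I)) (iota 1 n) by apply: eq_filter.
by move=> e; rewrite -[X in X - _]e addKn.
Qed.

Lemma cnt_J n (q : pred nat) j : j <= n ->
  cnt (filter q (iota 1 n)) j + cnt (compl_idx n (filter q (iota 1 n))) j = j.
Proof.
move=> jn; rewrite /compl_idx (eq_in_filter (a2 := predC q)); first exact: split_cnt.
by move=> x xi; rewrite mem_filter xi andbT.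
Qed.

Lemma nth_le (s : seq nat) n i : all (fun x => x <= n) s -> nth 0 s i <= n.
Proof.
move=> al; case: (ltnP i (size s)) => [/(mem_nth 0) h | /(nth_default 0) ->] //.
exact: (allP al).
Qed.

Lemma count_eq_uniq (T : eqType) (p : pred T) s x : uniq s -> x \in s ->
  count (fun i => (i == x) && p i) s = p x.
Proof.
move=> us xs; rewrite (eq_count (a2 := fun i => (i == x) && p x)); last first.
  by move=> i /=; case: eqP => // ->.
case: (p x).
  rewrite (eq_count (a2 := pred1 x)); last by move=> i /=; rewrite andbT.
  by rewrite count_uniq_mem // xs.
by rewrite /= -(count_pred0 s); apply: eq_count => i /=; rewrite andbF.
Qed.

Section Lin.
Variables (K : fieldType) (vT : vectType K) (n : nat) (F : nat -> {vspace vT}).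
Hypothesis dimV : \dim {: vT} = n.
Hypothesis cF : complete_flag fullv F.

Lemma Fdim {j} : j <= n -> \dim (F j) = j.
Proof. by case: cF => _ [H _] jn; have := H j; rewrite dimV => /(_ jn) []. Qed.

Lemma Fstep {j} : j < n -> (F j <= F j.+1)%VS.
Proof. by case: cF => _ [_ [H _]] jn; apply: H; rewrite dimV. Qed.

Lemma Fmono a b : a <= b -> b <= n -> (F a <= F b)%VS.
Proof.
elim: b => [|b IH]; first by rewrite leqn0 => /eqP ->.
rewrite leq_eqVlt => /orP[/eqP -> _ // | ab bn].
exact: (subv_trans (IH ab (ltnW bn)) (Fstep bn)).
Qed.

Lemma dim_step (U : {vspace vT}) j : j < n ->
  \dim (U :&: F j.+1) = \dim (U :&: F j) + (U :&: F j.+1 != U :&: F j)%VS.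
Proof.
move=> jn.
have sub : (U :&: F j <= U :&: F j.+1)%VS by apply: capvS => //; exact: Fstep.
have le1 : \dim (U :&: F j.+1) <= \dim (U :&: F j) + 1.
  have := dimv_sum_cap (U :&: F j.+1) (F j).
  have h1 : \dim (U :&: F j.+1 + F j) <= j.+1.
    rewrite -[X in _ <= X](Fdim jn); apply: dimvS; rewrite subv_add capvSr Fstep //.
  have h2 : \dim ((U :&: F j.+1) :&: F j) <= \dim (U :&: F j).
    by apply: dimvS; apply: capvS => //; exact: capvSl.
  rewrite (Fdim (ltnW jn)); lia.
case: eqP => [-> | ne]; first by rewrite addn0.
have : \dim (U :&: F j) < \dim (U :&: F j.+1).
  rewrite ltnNge; apply/negP => h; apply: ne; apply/eqP; rewrite eq_sym eqEdim sub h.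
  done.
lia.
Qed.

Lemma g_cnt (U : {vspace vT}) j : j <= n ->
  cnt (jump_set n F U) j = \dim (U :&: F j).
Proof.
rewrite /cnt /jump_set count_filter.
elim: j => [_|j IH jn].
  case: cF => [F0 _]; rewrite F0 capv0 dimv0.
  by rewrite (eq_in_count (a2 := pred0)) ?count_pred0 // => i; rewrite mem_iota /=; lia.
rewrite dim_step // -IH ?(ltnW jn) //.
set q := fun i => (U :&: F i != U :&: F i.-1)%VS.
have -> : count (predI (fun x => x <= j.+1) q) (iota 1 n) =
   count (predI (fun x => x <= j) q) (iota 1 n) + count (fun i => (i == j.+1) && q i) (iota 1 n).
  elim: (iota 1 n) => //= x s ->; case: (q x); rewrite ?andbT ?andbF /=;
  case: (ltngtP x j.+1) => //= [h|h|->]; rewrite ?leqnn /=; lia.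
rewrite (@count_eq_uniq _ q _ j.+1 (iota_uniq 1 n)) //.
by rewrite mem_iota; lia.
Qed.

End Lin.
Import GRing.Theory.

Theorem lemma2 (R : realType) (n r : nat) (vT wT : vectType R[i])
    (F : nat -> {vspace vT}) (I : seq nat) (U : {vspace vT})
    (pi : 'Hom(vT, wT)) :
  \dim {: vT} = n ->
  complete_flag fullv F ->
  index_set n I -> size I = r ->
  schubert_variety fullv F I U ->
  lker pi = U -> limg pi = fullv ->
  (forall (x : nat) (P : seq nat) (X : {vspace vT}),
      index_set r P -> size P = x ->
      schubert_variety U (sub_flag n F U) P X ->
      schubert_variety fullv F (idx_sub I P) X)
  /\
  (forall (y : nat) (P : seq nat) (Y : {vspace wT}) (Z : {vspace vT}),
      index_set (n - r) P -> size P = y ->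
      schubert_variety fullv (quot_flag n F U pi) P Y ->
      (U <= Z)%VS -> Y = (pi @: Z)%VS ->
      schubert_variety fullv F (idx_plus n I P) Z).
Proof.
move=> dimV cF iI sI [_ [dU sU]] kp _.
have Fm := @Fmono _ _ _ _ dimV cF.
have gc := @g_cnt _ _ _ _ dimV cF U.
have sIl : sorted leq I by apply: ltn_leq_sorted; case/andP: iI.
have aI : all (fun j => j <= n) I.
  by case/andP: iI => _ /allP a; apply/allP => x /a /andP[].
have gI : forall j, j <= n -> cnt I j <= \dim (U :&: F j).
  move=> j jn; case k0 : (cnt I j) => [//|k].
  have hk : nth 0 I k <= j by have := @lemB I j k.+1 sIl; rewrite k0 leqnn; apply.
  have kI : k < size I by rewrite -k0 /cnt count_size.
  apply: leq_trans (sU k kI) _; apply: dimvS; apply: capvS => //.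
  exact: Fm _ _ hk jn.
set H := jump_set n F U.
have sH : sorted ltn H.
  by rewrite /H /jump_set; apply: sorted_filter; [exact: ltn_trans | exact: iota_ltn_sorted].
split.
- move=> x P X iP sP [XU [dX sX]]; split; first exact: subvf.
  split; first by rewrite size_map dX.
  move=> a; rewrite size_map => ha.
  rewrite (nth_map 0) //.
  set p := nth 0 P a.
  have [p0 pr] : 0 < p /\ p <= r.
    by case/andP: iP => _ /allP /(_ p (mem_nth 0 ha)) /andP[].
  have := sX a ha; rewrite -/p /sub_flag -/H.
  case: p p0 pr => // p _ pr /=.
  set ip := nth 0 I p.
  have pI : p < size I by rewrite sI.
  have ipn : ip <= n by apply: nth_le.
  have hp : nth 0 H p <= ip.
    apply: (@lemB H ip p.+1 (ltn_leq_sorted _ sH)) => /=.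
    rewrite /H gc //; apply: leq_trans (gI _ ipn).
    exact: lemA.
  move=> h; apply: leq_trans h _; apply: dimvS; apply: capvS => //.
  apply: subv_trans (capvSl _ _) _; exact: Fm _ _ hp ipn.
- move=> y P Y Z iP sP [_ [dY sY]] UZ YZ.
  have sPl : sorted ltn P by case/andP: iP.
  have uP : uniq P by apply: (sorted_uniq ltn_trans ltnn).
  have aP : forall p, p \in P -> 0 < p <= n - r.
    by move=> p pP; case/andP: iP => _ /allP /(_ p pP).
  set ic := compl_idx n I.
  set hc := compl_idx n H.
  have sic : size ic = n - r by rewrite /ic size_compl // sI.
  have UZ' : (Z :&: lker pi = U)%VS by rewrite kp; apply/capv_idPr.
  split; first exact: subvf.
  split.
    rewrite /idx_plus size_sort size_cat size_map -(limg_ker_dim pi Z) UZ' -YZ dY dU.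
    by [].
  set J := idx_plus n I P.
  have sJ : sorted leq J by apply: sort_sorted; exact: leq_total.
  move=> a ha; set j := nth 0 J a.
  have jn : j <= n.
    apply: nth_le; apply/allP => z; rewrite /J /idx_plus mem_sort mem_cat.
    case/orP => [/(allP aI) // | /mapP [p _ ->]].
    apply: nth_le; apply/allP => w; rewrite /ic /compl_idx mem_filter mem_iota.
    case/andP => _; lia.
  apply: leq_trans (lemA _ _ _ sJ ha (leqnn j)) _.
  have -> : cnt J j = cnt I j + count (fun p => nth 0 ic p.-1 <= j) P.
    rewrite /cnt /J /idx_plus (permP (permEl (perm_sort _ _))) count_cat count_map.
    by [].
  set cI := cnt ic j.
  set cH := cnt hc j.
  set g := \dim (U :&: F j).
  have S1 : count (fun p => nth 0 ic p.-1 <= j) P <= cnt P cI.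
    apply: count_sub_in => p pP hp.
    have /andP[p0 pn] := aP p pP.
    have := @lemA ic p.-1 j (ltn_leq_sorted _ (compl_sorted n I)).
    rewrite sic prednK //; apply => //; lia.
  have S2 : cnt I j + cI = j by apply: cnt_I.
  have S2' : cnt H j + cH = j by rewrite /cH /hc /H /jump_set; apply: cnt_J.
  have S3 : cnt I j <= g by apply: gI.
  have S4 : cnt H j = g by apply: gc.
  have S5 : cnt P cI <= cnt P cH + (cI - cH) by apply: lemC => //; lia.
  set m := cnt P cH.
  have S6 : m <= \dim (Y :&: pi @: (U + F j)).
    case m0 : m => [//|m'].
    have mP : m' < size P by rewrite -m0 /m /cnt count_size.
    have /andP[pm0 _] := aP _ (mem_nth 0 mP).
    have hm : nth 0 P m' <= cH.
      have := @lemB P cH m'.+1 (ltn_leq_sorted _ sPl); rewrite -/m m0 leqnn; by apply.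
    have hcj : nth 0 hc (nth 0 P m').-1 <= j.
      apply: (@lemB hc j (nth 0 P m') (ltn_leq_sorted _ (compl_sorted n H))).
      by rewrite pm0 /=; exact: hm.
    have nz : (nth 0 P m' == 0) = false by apply/negbTE; rewrite -lt0n.
    have := sY m' mP; rewrite /quot_flag nz -/H -/hc => h.
    apply: leq_trans h _; apply: dimvS; apply: capvS => //.
    apply: limgS; apply: addvS => //.
    exact: Fm _ _ hcj jn.
  have S7 : \dim (Y :&: pi @: (U + F j)) + g <= \dim (Z :&: F j).
    have e := limg_ker_dim pi (Z :&: F j).
    have e0 : ((Z :&: F j) :&: lker pi = U :&: F j)%VS.
      by rewrite kp (capvC (Z :&: F j)%VS U) capvA (elimT capv_idPl UZ).
    rewrite e0 in e.
    rewrite -e -/g addnC leq_add2l; apply: dimvS.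
    rewrite YZ; apply/subvP => w /memv_capP [/memv_imgP [z zZ ->]].
    case/memv_imgP => x /memv_addP [u uU [f fF ->]] e2.
    have pu : pi u = 0%R by apply/eqP; rewrite -memv_ker kp.
    have e3 : pi z = pi f by rewrite e2 raddfD /= pu add0r.
    have zf : (z - f)%R \in U by rewrite -kp memv_ker raddfB /= e3 subrr.
    have fZ : f \in Z.
      have -> : f = (z - (z - f))%R by rewrite opprB addrC subrK.
      by apply: memvB => //; apply: (subvP UZ).
    by rewrite e3; apply: memv_img; rewrite memv_cap fZ fF.
  lia.
Qed.
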